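(* Let $\mathcal{G}=(\mathcal{V},\mathcal{E})$ be a graph, let $\epsilon>0$, $\Lambda>0$, $k>0$ and $\gamma\in(0,1)$, and let $\mathcal{Z}$ be a $k$-covering of $\mathcal{G}$ of size $Z$. Then there is an algorithm $\mathcal{A}$ that is $\epsilon$-differentially private on $\mathcal{G}$ such that for any $w:\mathcal{E}\to[0,\Lambda]$, with probability at least $1-\gamma$, $\mathcal{A}(w)$ releases all-pairs distances with approximation error $O\big(k\Lambda+Z^2\epsilon^{-1}\log(Z/\gamma)\big)$ per distance.
   Context: Private edge weight model: for a graph $\mathcal{G}=(\mathcal{V},\mathcal{E})$, a weight function is $w:\mathcal{E}\to\mathbb{R}^+$ (nonnegative reals). Two weight functions $w,w'$ are neighboring if $\sum_{e\in\mathcal{E}}|w(e)-w'(e)|\le 1$. A randomized algorithm $\mathcal{A}$ taking weight functions on $\mathcal{E}$ as input is $\epsilon$-differentially private on $\mathcal{G}$ if for all neighboring $w,w'$ and all sets $S$ of outputs, $\Pr[\mathcal{A}(w)\in S]\le e^{\epsilon}\Pr[\mathcal{A}(w')\in S]$. The weight of a path is the sum of the weights of its edges, and $d_w(x,y)$ is the minimum weight of a path from $x$ to $y$; the approximation error of a released distance for $(x,y)$ is the absolute difference between the released value and $d_w(x,y)$. A subset $\mathcal{Z}\subseteq\mathcal{V}$ is a $k$-covering if for every $v\in\mathcal{V}$ there is $z\in\mathcal{Z}$ joined to $v$ by a path with at most $k$ edges. The $O(\cdot)$ hides absolute constants. *)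

(* Defs.v *)
From HB Require Import structures.
From mathcomp Require Import all_boot all_order all_algebra.
From mathcomp Require Import all_classical all_reals all_analysis.
Set Implicit Arguments. Unset Strict Implicit. Unset Printing Implicit Defensive.
Import Order.TTheory GRing.Theory Num.Theory.
Local Open Scope classical_set_scope.
Local Open Scope ring_scope.

Section GraphDefs.
Variables (V E : finType) (ep : E -> V * V).
(* A graph (V, E): each edge e joins the two (undirected) endpoints ep e. *)

Inductive walk : V -> V -> seq E -> Prop :=
| walk_nil x : walk x x [::]
| walk_cons x y z e p :
    (ep e = (x, z) \/ ep e = (z, x)) -> walk z y p -> walk x y (e :: p).

Definition gconnected (x y : V) : Prop := exists p, walk x y p.

Definition k_covering (k : nat) (Z : {set V}) : Prop :=
  forall v : V, exists2 z, z \in Z & exists p, walk z v p /\ (size p <= k)%N.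

Variable R : realType.

Definition path_weight (w : E -> R) (p : seq E) : R := \sum_(e <- p) w e.

Definition wdist (w : E -> R) (x y : V) : R :=
  inf [set path_weight w p | p in [set p | walk x y p]].

Definition nonneg_weight (w : E -> R) : Prop := forall e, 0 <= w e.

Definition neighboring (w w' : E -> R) : Prop :=
  \sum_(e : E) `|w e - w' e| <= 1.

Definition cylinder : set (set (V -> V -> R)) :=
  [set S | exists x y (B : set R), measurable B /\ S = [set f | B (f x y)]].

Definition out_measurable (S : set (V -> V -> R)) : Prop := <<s cylinder >> S.

(* A randomized algorithm: randomness from a probability space (Omega, P);
   A w omega is the output on input weights w. It is a random variable for
   each w (each released coordinate is measurable). *)
Definition is_random_alg (d : measure_display) (Omega : measurableType d)
  (A : (E -> R) -> Omega -> V -> V -> R) : Prop :=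
  forall w x y, measurable_fun setT (fun om => A w om x y).

Definition edge_DP (d : measure_display) (Omega : measurableType d)
  (P : probability Omega R) (A : (E -> R) -> Omega -> V -> V -> R) (eps : R) : Prop :=
  forall w w' : E -> R, nonneg_weight w -> nonneg_weight w' -> neighboring w w' ->
  forall S, out_measurable S ->
    (P (A w @^-1` S) <= (expR eps)%:E * P (A w' @^-1` S))%E.

End GraphDefs.

(* Main.v *)
Require Import Defs.
From HB Require Import structures.
From mathcomp Require Import all_boot all_order all_algebra.
From mathcomp Require Import all_classical all_reals all_analysis.
From mathcomp Require Import ring lra zify.
Import Order.TTheory GRing.Theory Num.Theory.
Local Open Scope classical_set_scope.
Local Open Scope ring_scope.
Set Implicit Arguments. Unset Strict Implicit. Unset Printing Implicit Defensive.


Section Graph.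
Variables (V E : finType) (ep : E -> V * V).

Lemma walk_cat x y z p q : walk ep x y p -> walk ep y z q -> walk ep x z (p ++ q).
Proof.
elim=> [//|a b c e p' He Hw IH] Hq /=.
by apply: walk_cons He (IH Hq).
Qed.

Lemma walk_rev x y p : walk ep x y p -> walk ep y x (rev p).
Proof.
elim=> [a|a b c e p' He Hw IH]; first exact: walk_nil.
rewrite rev_cons -cats1; apply: walk_cat IH _.
apply: (walk_cons (z:=a)); last exact: walk_nil.
by case: He => ->; [right|left].
Qed.

Lemma walk_inv x y a p : walk ep x y (a :: p) ->
  exists z, (ep a = (x, z) \/ ep a = (z, x)) /\ walk ep z y p.
Proof. by move=> H; inversion H; subst; eauto. Qed.

Lemma walk_nil_inv x y : walk ep x y [::] -> x = y.
Proof. by move=> H; inversion H. Qed.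

Lemma walk_split x y p e q : walk ep x y (p ++ e :: q) ->
  exists u v, (ep e = (u, v) \/ ep e = (v, u)) /\ walk ep x u p /\ walk ep v y q.
Proof.
elim: p x => [|a p IH] x /=.
  move=> /walk_inv [z [H1 H2]].
  by exists x, z; split=> //; split=> //; exact: walk_nil.
move=> /walk_inv [z [H1 H2]].
have [u [v [H3 [H4 H5]]]] := IH _ H2.
exists u, v; split=> //; split=> //; exact: walk_cons H1 H4.
Qed.

Lemma walk_uniq x y p : walk ep x y p ->
  exists p', [/\ walk ep x y p', uniq p' & {subset p' <= p}].
Proof.
elim=> [a|a b c e p' He Hw [q [Hq Uq Sq]]].
  by exists [::]; split=> //; exact: walk_nil.
case Eq: (e \in q).
  move: Eq => /splitPr [q1 q2] in Hq Uq Sq *.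
  have [u [v [H1 [H2 H3]]]] := walk_split Hq.
  have Sq2 : {subset q2 <= e :: p'}.
    by move=> f Hf; rewrite inE Sq ?orbT // mem_cat inE Hf !orbT.
  have /andP[Nq2 Uq2] : (e \notin q2) && uniq q2.
    by move: Uq; rewrite cat_uniq => /and3P[_ _ ].
  have [Hva|Hvc] : v = a \/ v = c.
    case: He => He; case: H1 => H1; rewrite He in H1; case: H1 => *; subst; auto.
  - by subst v; exists q2.
  - subst v; exists (e :: q2); split=> //=; first exact: walk_cons He H3.
      by rewrite Nq2.
    by move=> f; rewrite inE => /orP[/eqP->|/Sq2 //]; rewrite inE eqxx.
exists (e :: q); split=> /=; first exact: walk_cons He Hq.
  by rewrite Eq.
by move=> f; rewrite !inE => /orP[->//|/Sq ->]; rewrite orbT.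
Qed.

Lemma size_uniq_le (p : seq E) : uniq p -> (size p <= #|E|)%N.
Proof. by move=> Up; rewrite -(card_uniqP Up) max_card. Qed.

Variable R : realType.

Lemma sum_sub_le (F : E -> R) (p' p : seq E) : (forall e, 0 <= F e) ->
  uniq p' -> {subset p' <= p} -> \sum_(e <- p') F e <= \sum_(e <- p) F e.
Proof.
move=> F0; elim: p p' => [|a p IH] p' Up' Sp.
  by case: p' Up' Sp => // b p' _ /(_ b); rewrite inE eqxx => /(_ isT).
rewrite big_cons; case Ha: (a \in p').
  rewrite (perm_big _ (perm_to_rem Ha)) big_cons lerD2l.
  apply: IH; first by rewrite rem_uniq.
  move=> f Hf; have := Sp f (mem_rem Hf); rewrite inE => /orP[/eqP Efa|//].
  by subst f; move: Hf; rewrite mem_rem_uniqF // Ha.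
apply: (le_trans (IH _ Up' _)); last by rewrite lerDr.
move=> f Hf; have := Sp f Hf; rewrite inE => /orP[/eqP Efa|//].
by subst f; rewrite Hf in Ha.
Qed.

Lemma sum_uniq_all (F : E -> R) (p : seq E) : (forall e, 0 <= F e) ->
  uniq p -> \sum_(e <- p) F e <= \sum_e F e.
Proof.
move=> F0 Up; rewrite -big_enum; apply: sum_sub_le => //.
by move=> f _; rewrite mem_enum.
Qed.

Lemma pw_cat (w : E -> R) p q : path_weight w (p ++ q) = path_weight w p + path_weight w q.
Proof. by rewrite /path_weight big_cat. Qed.

Lemma pw_rev (w : E -> R) p : path_weight w (rev p) = path_weight w p.
Proof. by rewrite /path_weight big_rev. Qed.

Lemma pw_ge0 (w : E -> R) p : nonneg_weight w -> 0 <= path_weight w p.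
Proof. by move=> w0; rewrite /path_weight sumr_ge0. Qed.

Lemma pw_le (w : E -> R) (L : R) p : (forall e, w e <= L) -> path_weight w p <= (size p)%:R * L.
Proof.
move=> wL; rewrite /path_weight; elim: p => [|a p IH]; first by rewrite big_nil mul0r.
by rewrite big_cons /= -addn1 natrD mulrDl mul1r addrC lerD.
Qed.

Definition wset (w : E -> R) x y := [set path_weight w p | p in [set p | walk ep x y p]].

Lemma wdist_le (w : E -> R) x y p : nonneg_weight w -> walk ep x y p ->
  wdist ep w x y <= path_weight w p.
Proof.
move=> w0 Hp; apply: ge_inf; last by exists p.
by exists 0 => _ [q _ <-]; exact: pw_ge0.
Qed.

Lemma wdist_ge (w : E -> R) x y (b : R) : gconnected ep x y ->
  (forall p, walk ep x y p -> b <= path_weight w p) -> b <= wdist ep w x y.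
Proof.
move=> [p Hp] Hb; apply: lb_le_inf; first by exists (path_weight w p), p.
by move=> _ [q Hq <-]; exact: Hb.
Qed.

Lemma wdist_nc (w : E -> R) x y : ~ gconnected ep x y -> wdist ep w x y = 0.
Proof.
move=> nc; rewrite /wdist.
suff -> : [set path_weight w p | p in [set p | walk ep x y p]] = set0 by exact: inf0.
by apply/seteqP; split=> // r [q Hq _]; case: nc; exists q.
Qed.

Lemma wdist_ge0 (w : E -> R) x y : nonneg_weight w -> 0 <= wdist ep w x y.
Proof.
move=> w0; case: (pselect (gconnected ep x y)) => [[p Hp]|nc].
  by apply: wdist_ge; [exists p | move=> q _; exact: pw_ge0].
by rewrite wdist_nc.
Qed.

Lemma wdist_sens (w w' : E -> R) x y : nonneg_weight w -> nonneg_weight w' ->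
  neighboring w w' -> wdist ep w x y <= wdist ep w' x y + 1.
Proof.
move=> w0 w'0 Hn; case: (pselect (gconnected ep x y)) => [Hc|nc]; last first.
  by rewrite !wdist_nc // add0r ler01.
rewrite -lerBlDr; apply: wdist_ge => // p Hp.
have [q [Hq Uq Sq]] := walk_uniq Hp.
rewrite lerBlDr; apply: (le_trans (wdist_le w0 Hq)).
apply: (@le_trans _ _ (path_weight w' q + 1)); last first.
  by rewrite lerD2r; apply: sum_sub_le.
have -> : path_weight w q = path_weight w' q + \sum_(e <- q) (w e - w' e).
  by rewrite /path_weight -big_split /=; apply: eq_bigr => e _; rewrite addrC subrK.
rewrite lerD2l; apply: (le_trans _ Hn).
apply: (le_trans _ (sum_uniq_all (fun e => normr_ge0 (w e - w' e)) Uq)).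
by apply: ler_sum => e _; exact: ler_norm.
Qed.

Lemma wdist_sens_abs (w w' : E -> R) x y : nonneg_weight w -> nonneg_weight w' ->
  neighboring w w' -> `|wdist ep w x y - wdist ep w' x y| <= 1.
Proof.
move=> w0 w'0 Hn; rewrite ler_norml.
have H1 := wdist_sens x y w0 w'0 Hn.
have H2 : wdist ep w' x y <= wdist ep w x y + 1.
  apply: wdist_sens => //.
  by rewrite /neighboring; under eq_bigr do rewrite distrC.
apply/andP; split; lra.
Qed.

End Graph.


Section Center.
Variables (V E : finType) (ep : E -> V * V) (R : realType).

Lemma center_approx (w : E -> R) (L : R) (k : nat) x y zx zy px py :
  0 <= L -> (forall e, 0 <= w e <= L) -> gconnected ep x y ->
  walk ep zx x px -> (size px <= k)%N -> walk ep zy y py -> (size py <= k)%N ->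
  `|wdist ep w zx zy - wdist ep w x y| <= 2 * (k%:R * L) /\
  wdist ep w zx zy <= #|E|%:R * L.
Proof.
move=> L0 wL [r Hr] Hx kx Hy ky.
have w0 : nonneg_weight w by move=> e; case/andP: (wL e).
have wle : forall e, w e <= L by move=> e; case/andP: (wL e).
have pwk : forall p, (size p <= k)%N -> path_weight w p <= k%:R * L.
  move=> p Hp; apply: (le_trans (pw_le p wle)); apply: ler_wpM2r => //.
  by rewrite ler_nat.
have Hz : walk ep zx zy (px ++ r ++ rev py).
  by apply: walk_cat Hx (walk_cat Hr (walk_rev Hy)).
have pxk := pwk _ kx; have pyk := pwk _ ky.
split; last first.
  have [q [Hq Uq _]] := walk_uniq Hz.
  apply: (le_trans (wdist_le w0 Hq)); apply: (le_trans (pw_le q wle)).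
  by apply: ler_wpM2r => //; rewrite ler_nat size_uniq_le.
have H1 : wdist ep w zx zy <= wdist ep w x y + 2 * (k%:R * L).
  rewrite -lerBlDr; apply: wdist_ge; first by exists r.
  move=> q Hq; rewrite lerBlDr.
  apply: (le_trans (wdist_le w0 (walk_cat Hx (walk_cat Hq (walk_rev Hy))))).
  rewrite !pw_cat pw_rev; lra.
have H2 : wdist ep w x y <= wdist ep w zx zy + 2 * (k%:R * L).
  rewrite -lerBlDr; apply: wdist_ge; first by exists (px ++ r ++ rev py).
  move=> q Hq; rewrite lerBlDr.
  apply: (le_trans (wdist_le w0 (walk_cat (walk_rev Hx) (walk_cat Hq Hy)))).
  rewrite !pw_cat pw_rev; lra.
rewrite ler_norml; apply/andP; split; lra.
Qed.
End Center.


Section Cyc.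
Variable n : nat.
Local Notation N := n.+1.

Definition cd (a : 'I_N) : nat := minn a (N - a).

Lemma modN_small a : (a < N)%N -> (a %% N = a)%N.
Proof. exact: modn_small. Qed.

Lemma val_add (a b : 'I_N) : nat_of_ord (a + b)%R =
  (if (a + b < N)%N then a + b else a + b - N)%N.
Proof.
have -> : nat_of_ord (a + b)%R = ((a + b) %% N)%N by [].
have ha := ltn_ord a; have hb := ltn_ord b.
case: ifP => H; first by rewrite modn_small.
have -> : (a + b = (a + b - N) + N)%N by lia.
by rewrite modnDr modn_small; lia.
Qed.

Lemma val_opp (a : 'I_N) : nat_of_ord (- a)%R = (if a == 0 :> nat then 0 else N - a)%N.
Proof.
have -> : nat_of_ord (- a)%R = ((N - a) %% N)%N by [].
have ha := ltn_ord a.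
case: eqP => H; first by rewrite H subn0 modnn.
by rewrite modn_small; lia.
Qed.

Lemma cd_add (a b : 'I_N) : (cd (a + b)%R <= cd a + cd b)%N.
Proof.
rewrite /cd val_add; have ha := ltn_ord a; have hb := ltn_ord b.
case: ifP => H; lia.
Qed.

Lemma cd_opp (a : 'I_N) : cd (- a) = cd a.
Proof. rewrite /cd val_opp; have ha := ltn_ord a; case: eqP => H; lia. Qed.

Lemma cd_sub (a b : 'I_N) : (cd (a - b)%R <= (a - b) + (b - a))%N.
Proof.
rewrite /cd val_add val_opp; have ha := ltn_ord a; have hb := ltn_ord b.
case: eqP => H1; case: ifP => H2; lia.
Qed.

End Cyc.

Section Tail1.
Variables (R : realType) (n : nat).
Local Notation N := n.+1.

Definition phi (t : nat) (a : 'I_N) : 'I_N :=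
  if (2 * a <= N)%N then inord (a - t) else inord (a + t).

Lemma phi_cd t a : (t < cd a)%N -> cd (phi t a) = (cd a - t)%N.
Proof.
rewrite /phi /cd => H; have ha := ltn_ord a.
case: ifP => H2; rewrite inordK; lia.
Qed.

Lemma phi_inj t : {in [pred a : 'I_N | (t < cd a)%N] &, injective (phi t)}.
Proof.
move=> a b; rewrite !inE /phi /cd => Ha Hb; have ha := ltn_ord a; have hb := ltn_ord b.
move=> /(congr1 (@nat_of_ord _)) E; apply: val_inj => /=; move: E.
by case: ifP => H1; case: ifP => H2; rewrite !inordK; lia.
Qed.

Lemma sum_in_le (T : finType) (S : {pred T}) (F : T -> R) : (forall j, 0 <= F j) ->
  \sum_(j in S) F j <= \sum_j F j.
Proof.
move=> F0; rewrite [X in _ <= X](bigID (mem S)) /= lerDl.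
by apply: sumr_ge0 => j _.
Qed.

Lemma tail1 (b : R) (t : nat) :
  \sum_(a : 'I_N | (t < cd a)%N) expR (- b * (cd a)%:R)
  <= expR (- b * t%:R) * \sum_(a : 'I_N) expR (- b * (cd a)%:R).
Proof.
set A := [pred a : 'I_N | (t < cd a)%N].
have -> : \sum_(a : 'I_N | (t < cd a)%N) expR (- b * (cd a)%:R) =
          \sum_(a in A) (expR (- b * t%:R) * expR (- b * (cd (phi t a))%:R)).
  apply: eq_bigr => a Ha; rewrite -expRD phi_cd //; congr expR.
  rewrite -mulrDr natrB ?(ltnW Ha) //; ring.
rewrite -mulr_sumr ler_wpM2l ?expR_ge0 //.
rewrite -(big_imset (fun j => expR (- b * (cd j)%:R)) (@phi_inj t)) /=.
exact: sum_in_le (fun j => expR_ge0 _).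
Qed.

End Tail1.

Section Mech.
Variables (R : realType) (I : finType) (n : nat) (b : R).
Hypothesis b0 : 0 <= b.

Local Notation Om := {ffun I -> 'I_n.+1}.
Definition wsum (f : Om) : R := \sum_i (cd (f i))%:R.
Definition wt (f : Om) : R := expR (- b * wsum f).
Definition ndecode (k : nat) : Om := nth [ffun=> ord0] (enum Om) k.
Definition wnn (k : nat) : {nonneg R} := NngNum (expR_ge0 (- b * wsum (ndecode k))).
Definition mu := msum (fun k : nat => mscale (wnn k) \d_k) #|Om|.
Definition Pn : probability nat R := mnormalize mu \d_0%N.

Definition S0 := \sum_(f : Om) wt f.

Lemma S0_gt0 : 0 < S0.
Proof.
rewrite /S0 (bigD1 [ffun=> ord0]) //=.
by apply: ltr_pwDl; [exact: expR_gt0 | apply: sumr_ge0 => f _; exact: expR_ge0].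
Qed.

Lemma ndecodeK (f : Om) : ndecode (enum_rank f) = f.
Proof. exact: nth_enum_rank. Qed.

Lemma muE U : mu U = (\sum_(f : Om) wt f * ((enum_rank f : nat) \in U)%:R)%:E.
Proof.
rewrite /mu /msum /mscale /=.
transitivity (\sum_(k < #|Om|) ((wnn k)%:num * ((k : nat) \in U)%:R)%:E).
  by apply: eq_bigr => k _; rewrite /mscale /= diracE -EFinM.
rewrite sumEFin; congr EFin.
rewrite (reindex enum_rank) /=; last exact: onW_bij (enum_rank_bij _).
by apply: eq_bigr => f _; rewrite ndecodeK.
Qed.

Lemma PE U : Pn U = ((\sum_(f : Om) wt f * ((enum_rank f : nat) \in U)%:R) / S0)%:E.
Proof.
have mT : mu [set: nat] = S0%:E.
  rewrite muE; congr EFin; apply: eq_bigr => f _.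
  by rewrite in_setT mulr1.
rewrite /Pn /= /mnormalize /= -/mu mT ifF; last first.
  by apply/negbTE; rewrite negb_or eqe; apply/andP; split=> //; rewrite gt_eqF // S0_gt0.
by rewrite muE /= EFinM.
Qed.

Lemma wt_ge0 f : 0 <= wt f. Proof. exact: expR_ge0. Qed.

Lemma dp_gen (T : Type) (Out : Om -> T) (S : set T) (r r' : Om) :
  (Pn [set k | S (Out (r + ndecode k)%R)] <=
   (expR (b * \sum_i (cd (r i - r' i)%R)%:R))%:E * Pn [set k | S (Out (r' + ndecode k)%R)])%E.
Proof.
rewrite !PE -EFinM lee_fin mulrA ler_pM2r ?invr_gt0 ?S0_gt0 //.
have memE (r0 : Om) f : ((enum_rank f : nat) \in [set k | S (Out (r0 + ndecode k))])
    = (Out (r0 + f) \in S).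
  by apply/idP/idP => /set_mem H; apply/mem_set; move: H; rewrite /= ndecodeK.
under eq_bigr do rewrite memE.
under [X in _ <= _ * X]eq_bigr do rewrite memE.
rewrite (reindex (fun g : Om => g - r)) /=; last first.
  by exists (fun f => f + r) => g _; [rewrite subrK | rewrite addrK].
rewrite [X in _ <= _ * X](reindex (fun g : Om => g - r')) /=; last first.
  by exists (fun f => f + r') => g _; [rewrite subrK | rewrite addrK].
rewrite mulr_sumr; apply: ler_sum => g _.
rewrite !(addrC _ (g - _)) !subrK mulrA ler_wpM2r //.
rewrite /wt -expRD ler_expR /wsum.
have H : \sum_i ((cd ((g - r') i))%:R : R) <=
         \sum_i (cd ((g - r) i))%:R + \sum_i (cd (r i - r' i))%:R.
  rewrite -big_split /=; apply: ler_sum => i _; rewrite -natrD ler_nat !ffunE.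
  have -> : g i - r' i = (g i - r i) + (r i - r' i) by rewrite addrA subrK.
  exact: cd_add.
have := ler_wpM2l b0 H; lra.
Qed.

Lemma factor (t : nat) (i0 : I) :
  \sum_(f : Om) wt f * (t < cd (f i0))%:R <= expR (- b * t%:R) * S0.
Proof.
pose e (j : 'I_n.+1) : R := expR (- b * (cd j)%:R).
pose F (i : I) (j : 'I_n.+1) : R := e j * (if i == i0 then (t < cd j)%:R else 1).
have wtE f : wt f = \prod_i e (f i).
  by rewrite /wt /wsum mulr_sumr expR_sum.
have -> : \sum_(f : Om) wt f * (t < cd (f i0))%:R = \prod_i \sum_j F i j.
  rewrite bigA_distr_bigA /=; apply: eq_bigr => f _.
  rewrite /F big_split /= wtE; congr (_ * _).
  by rewrite (bigD1 i0) //= eqxx big1 ?mulr1 // => i /negbTE ->.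
have -> : S0 = \prod_(i : I) \sum_j e j.
  rewrite /S0 bigA_distr_bigA /=; apply: eq_bigr => f _; exact: wtE.
rewrite (bigD1 i0) //= [X in _ <= _ * X](bigD1 i0) //= mulrA.
have -> : \prod_(i | i != i0) \sum_j F i j = \prod_(i : I | i != i0) \sum_j e j.
  apply: eq_bigr => i /negbTE Hi; apply: eq_bigr => j _; by rewrite /F Hi mulr1.
apply: ler_wpM2r; first by apply: prodr_ge0 => i _; apply: sumr_ge0 => j _; exact: expR_ge0.
rewrite /F eqxx.
have -> : \sum_j e j * (t < cd j)%:R = \sum_(j | (t < cd j)%N) e j.
  rewrite [RHS]big_mkcond /=; apply: eq_bigr => j _.
  by case: ifP; rewrite ?mulr1 ?mulr0.
rewrite /e; exact: (@tail1 R n b t).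
Qed.

Lemma acc_gen (U : set nat) (t : nat) :
  (forall f : Om, (forall i, (cd (f i) <= t)%N) -> U (enum_rank f)) ->
  ((1 - #|I|%:R * expR (- b * t%:R))%:E <= Pn U)%E.
Proof.
move=> HU; rewrite PE lee_fin ler_pdivlMr ?S0_gt0 //.
apply: (@le_trans _ _ (\sum_(f : Om) wt f * (1 - \sum_i (t < cd (f i))%:R))).
  rewrite [X in _ <= X](eq_bigr (fun f => wt f - \sum_i wt f * (t < cd (f i))%:R)); last first.
    by move=> f _; rewrite mulrBr mulr1 mulr_sumr.
  rewrite sumrB exchange_big /= -/(S0).
  have : \sum_i \sum_(f : Om) wt f * (t < cd (f i))%:R <= #|I|%:R * (expR (- b * t%:R) * S0).
    rewrite -sum1_card natr_sum mulr_suml; apply: ler_sum => i _; rewrite mul1r.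
    exact: factor.
  lra.
apply: ler_sum => f _; apply: ler_wpM2l; first exact: wt_ge0.
case: (boolP [forall i, (cd (f i) <= t)%N]) => [/forallP Hf|].
  rewrite big1 ?subr0; last by move=> i _; rewrite ltnNge Hf.
  have : (enum_rank f : nat) \in U by rewrite inE; apply: HU.
  by move=> ->.
rewrite negb_forall => /existsP [i0]; rewrite -ltnNge => Hi0.
apply: (@le_trans _ _ 0); last by case: (_ \in _).
rewrite subr_le0 (bigD1 i0) //= Hi0 lerDl.
by apply: sumr_ge0 => i _; case: (_ < _)%N.
Qed.
End Mech.


Lemma trunc_dist (R : realType) (x y : R) : 0 <= x -> 0 <= y ->
  (((Num.truncn x - Num.truncn y) + (Num.truncn y - Num.truncn x))%N)%:R <= `|x - y| + 1.
Proof.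
move=> x0 y0; have /andP[hx1 hx2] := truncn_itv x0; have /andP[hy1 hy2] := truncn_itv y0.
have hn1 := ler_norm (x - y); have hn2 : y - x <= `|x - y| by rewrite distrC ler_norm.
move: hx1 hx2 hy1 hy2; rewrite -!natr1.
move: (Num.truncn x) (Num.truncn y) => a c ha1 ha2 hc1 hc2.
case: (leqP c a) => H.
  have E0 : (c - a = 0)%N by apply/eqP; rewrite subn_eq0.
  rewrite E0 addn0 (natrB _ H).
  clear H E0 x0 y0 hn2 ha2 hc1; lra.
have E0 : (a - c = 0)%N by apply/eqP; rewrite subn_eq0 ltnW.
rewrite E0 add0n (natrB _ (ltnW H)).
clear H E0 x0 y0 hn1 ha1 hc2; lra.
Qed.

Lemma out_bound n (a b : 'I_n.+1) (T t : nat) : nat_of_ord a = (T + t)%N ->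
  (T + 2 * t <= n)%N -> (cd b <= t)%N ->
  (T <= nat_of_ord (a + b)%R <= T + 2 * t)%N.
Proof.
move=> Ha Hn Hb; rewrite val_add; move: Hb; rewrite /cd Ha; have hb := ltn_ord b.
clear Ha; move: (nat_of_ord b) hb => c hc; case: ifP => H; lia.
Qed.

Lemma minn_dist (a c t n : nat) :
  ((minn (a + t) n - minn (c + t) n) + (minn (c + t) n - minn (a + t) n) <= (a - c) + (c - a))%N.
Proof. lia. Qed.

Theorem theorem4p7 (R : realType) :
  exists C : R, 0 < C /\
  forall (V E : finType) (ep : E -> V * V) (eps Lambda gamma : R) (k : nat)
         (Z : {set V}),
    0 < eps -> 0 < Lambda -> (0 < k)%N -> 0 < gamma < 1 ->
    k_covering ep k Z ->
    exists (d : measure_display) (Omega : measurableType d)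
           (P : probability Omega R) (A : (E -> R) -> Omega -> V -> V -> R),
      is_random_alg A /\ edge_DP P A eps /\
      forall w : E -> R, (forall e, 0 <= w e <= Lambda) ->
        (P [set om | forall x y : V, gconnected ep x y ->
              (`|A w om x y - wdist ep w x y| <=
                C * (k%:R * Lambda + (#|Z|%:R ^+ 2 / eps) * ln (#|Z|%:R / gamma)))%R]
         >= (1 - gamma)%:E)%E.
Proof.
exists 4; split; first by [].
move=> V E ep eps Lam gam k Z eps0 Lam0 k0 /andP[gam0 gam1] Hcov.
have [c Hc] : {c : V -> V & forall v, c v \in Z /\
    exists p, walk ep (c v) v p /\ (size p <= k)%N}.
  apply: (@choice V V (fun v z => z \in Z /\ exists p, walk ep z v p /\ (size p <= k)%N)) => v; have [z zZ [p [Hp Sp]]] := Hcov v.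
  by exists z; split=> //; exists p.
pose sZ := {z : V | z \in Z}.
pose cs (v : V) : sZ := exist _ (c v) (proj1 (Hc v)).
pose I := (sZ * sZ)%type.
pose idx (x y : V) : I := (cs x, cs y).
pose D (w : E -> R) (i : I) := wdist ep w (val i.1) (val i.2).
pose s := #|Z|.
pose m := #|{: I}|.
have mE : m = (s * s)%N by rewrite /m card_prod card_sig; congr (_ * _)%N; apply: eq_card.
pose L : R := k%:R * Lam.
have L0 : 0 < L by rewrite /L mulr_gt0 // ltr0n.
pose dl : R := L / (1 + L).
have dl0 : 0 < dl by rewrite /dl divr_gt0 // addr_gt0.
have dl1 : dl <= 1 by rewrite /dl ler_pdivrMr ?addr_gt0 // mul1r lerDr ler01.
have dlL : dl <= L.
  rewrite /dl ler_pdivrMr ?addr_gt0 // mulrDr mulr1 lerDl.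
  by apply: mulr_ge0; apply: ltW.
pose Kc : R := m%:R * (dl^-1 + 1).
pose b : R := eps / Kc.
have Kc0 : 0 <= Kc.
  by rewrite /Kc; apply: mulr_ge0; [exact: ler0n | apply: addr_ge0; [rewrite invr_ge0; exact: ltW | exact: ler01]].
have b0 : 0 <= b by rewrite /b; apply: divr_ge0 => //; exact: ltW.
pose t : nat := (Num.truncn (Kc * ln (m%:R / gam) / eps)).+1.
pose n : nat := (Num.truncn (#|E|%:R * Lam / dl) + 2 * t)%N.
pose T (w : E -> R) (i : I) : nat := Num.truncn (D w i / dl).
pose r (w : E -> R) : {ffun I -> 'I_n.+1} := [ffun i => inord (minn (T w i + t) n)].
pose Out (u : {ffun I -> 'I_n.+1}) (x y : V) : R := dl * ((nat_of_ord (u (idx x y)))%:R - t%:R).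
exists default_measure_display, nat, (Pn I n b).
exists (fun w om => Out (r w + ndecode I n om)).
split.
  by move=> w x y mD Y mY.
split.
  move=> w w' w0 w'0 Hn S _.
  apply: (le_trans (dp_gen b0 (Out) S (r w) (r w'))).
  apply: lee_wpmul2r; first exact: measure_ge0.
  rewrite lee_fin ler_expR.
  have bK : b * Kc <= eps.
    case: (eqVneq Kc 0) => [->|nz]; first by rewrite mulr0; exact: ltW.
    by rewrite /b divfK.
  apply: le_trans bK; apply: ler_wpM2l => //.
  have -> : Kc = \sum_(i : I) (dl^-1 + 1) by rewrite sumr_const /Kc mulr_natl.
  apply: ler_sum => i _.
  have ha : nat_of_ord (r w i) = minn (T w i + t) n by rewrite ffunE inordK // ltnS geq_minr.
  have hb : nat_of_ord (r w' i) = minn (T w' i + t) n by rewrite ffunE inordK // ltnS geq_minr.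
  apply: (@le_trans _ _ ((((T w i - T w' i) + (T w' i - T w i))%N)%:R)).
    rewrite ler_nat; apply: (leq_trans (cd_sub _ _)); rewrite ha hb; exact: minn_dist.
  have D0 : forall w1, nonneg_weight w1 -> 0 <= D w1 i / dl.
    by move=> w1 w10; apply: divr_ge0; [exact: wdist_ge0 | exact: ltW].
  apply: (le_trans (trunc_dist (D0 _ w0) (D0 _ w'0))); rewrite lerD2r.
  rewrite -mulrBl normrM (@ger0_norm _ dl^-1); last by rewrite invr_ge0; exact: ltW.
  apply: (@le_trans _ _ (1 * dl^-1)); last by rewrite mul1r.
  apply: ler_wpM2r; first by rewrite invr_ge0; exact: ltW.
  exact: wdist_sens_abs.
move=> w wL.
have w0 : nonneg_weight w by move=> e; case/andP: (wL e).
set U := [set om | _].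
have key : forall f : {ffun I -> 'I_n.+1}, (forall i, (cd (f i) <= t)%N) -> U (enum_rank f).
  move=> f Hf; rewrite /U /= ndecodeK => x y Hxy.
  have [cxZ [px [Hpx Spx]]] := Hc x; have [_ [py [Hpy Spy]]] := Hc y.
  have [Happ HD] := center_approx (ltW Lam0) wL Hxy Hpx Spx Hpy Spy.
  pose i := idx x y.
  have Di : D w i = wdist ep w (c x) (c y) by [].
  rewrite -Di in Happ HD.
  have TE : (T w i <= Num.truncn (#|E|%:R * Lam / dl))%N.
    apply: le_truncn; apply: ler_wpM2r => //; rewrite invr_ge0; exact: ltW.
  have Tt : (T w i + 2 * t <= n)%N by rewrite /n leq_add2r.
  have ha : nat_of_ord (r w i) = (T w i + t)%N.
    rewrite ffunE; have -> : minn (T w i + t) n = (T w i + t)%N.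
      by apply/minn_idPl; apply: leq_trans Tt; rewrite leq_add2l leq_pmull.
    rewrite inordK // ltnS; apply: leq_trans Tt; rewrite leq_add2l leq_pmull //.
  have /andP[hv1 hv2] := out_bound ha Tt (Hf i).
  have -> : Out (r w + f) x y = dl * ((nat_of_ord (r w i + f i)%R)%:R - t%:R).
    by rewrite /Out ffunE.
  move: hv1 hv2; move: (nat_of_ord (r w i + f i)%R) => v hv1 hv2.
  have sp : (0 < s)%N by apply/card_gt0P; exists (c x).
  have D0 : 0 <= D w i by exact: wdist_ge0.
  have tr : (T w i)%:R <= D w i / dl < (T w i).+1%:R.
    exact: truncn_itv (divr_ge0 D0 (ltW dl0)).
  case/andP: tr => tr1 tr2.
  have dlT1 : dl * (T w i)%:R <= D w i by rewrite mulrC -ler_pdivlMr.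
  have dlT2 : D w i < dl * (T w i)%:R + dl.
    by move: tr2; rewrite ltr_pdivrMr // -natr1 mulrDl mul1r mulrC.
  have hv1' : dl * (T w i)%:R <= dl * v%:R.
    by apply: ler_wpM2l; [exact: ltW | rewrite ler_nat].
  have hv2' : dl * v%:R <= dl * (T w i)%:R + 2 * (dl * t%:R).
    rewrite mulrCA -mulrDr; apply: ler_wpM2l; first exact: ltW.
    by rewrite -(natrM _ 2 t) -natrD ler_nat.
  have F1 : `|dl * (v%:R - t%:R) - wdist ep w x y| <= dl * t%:R + dl + 2 * (k%:R * Lam).
    move: Happ; rewrite mulrBr !ler_norml => /andP[H1 H2].
    apply/andP; split.
      clear -H1 H2 dlT1 dlT2 hv1' hv2'; lra.
    clear -H1 H2 dlT1 dlT2 hv1' hv2'; lra.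
  have sR : 1 <= s%:R :> R by rewrite ler1n.
  have mEs : m%:R = s%:R ^+ 2 :> R by rewrite mE natrM expr2.
  have sg : s%:R <= s%:R / gam.
    rewrite ler_pdivlMr //; apply: ler_piMr; [exact: (le_trans ler01 sR) | exact: ltW].
  have sgp : 0 < s%:R / gam by apply: divr_gt0 => //; exact: (lt_le_trans ltr01 sR).
  have sp' : 0 < s%:R :> R by exact: (lt_le_trans ltr01 sR).
  have LN0 : 0 <= ln (s%:R / gam) by apply: ln_ge0; exact: le_trans sR sg.
  have mg : m%:R / gam = s%:R * (s%:R / gam) by rewrite mEs expr2 mulrA.
  have lnm : ln (m%:R / gam) <= 2 * ln (s%:R / gam).
    rewrite mg lnM ?posrE // mulr2n mulrDl mul1r lerD2r.
    by rewrite ler_ln ?posrE.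
  have lnm0 : 0 <= ln (m%:R / gam) by rewrite mg lnM ?posrE //; apply: addr_ge0 => //; exact: ln_ge0.
  pose X := Kc * ln (m%:R / gam) / eps.
  have X0 : 0 <= X by apply: divr_ge0; [exact: mulr_ge0 | exact: ltW].
  have tX : t%:R <= X + 1 by rewrite -natr1 lerD2r truncn_le.
  have dlt : dl * t%:R <= dl * X + dl.
    by rewrite -[X in _ <= _ + X]mulr1 -mulrDr; apply: ler_wpM2l => //; exact: ltW.
  have e1 : dl * X = (m%:R * (1 + dl)) * (ln (m%:R / gam) / eps).
    rewrite /X /Kc; field; apply/andP; split; rewrite gt_eqF //.
  have e2 : m%:R * (1 + dl) <= 2 * m%:R :> R.
    by rewrite mulrC ler_wpM2r ?ler0n // -[2]/(1 + 1) lerD2l.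
  have e3 : ln (m%:R / gam) / eps <= 2 * ln (s%:R / gam) / eps.
    by rewrite ler_pM2r ?invr_gt0.
  have e4 : dl * X <= (2 * m%:R) * (2 * ln (s%:R / gam) / eps).
    rewrite e1; apply: ler_pM => //.
      by apply: mulr_ge0 => //; apply: addr_ge0 => //; exact: ltW.
    by apply: divr_ge0 => //; exact: ltW.
  have e5 : (2 * m%:R) * (2 * ln (s%:R / gam) / eps) =
            4 * (#|Z|%:R ^+ 2 / eps * ln (#|Z|%:R / gam)) :> R.
    by rewrite mEs /s; ring.
  rewrite e5 in e4.
  move: F1 dlt e4 dlL; rewrite /L.
  move: (dl * X) (dl * t%:R) (#|Z|%:R ^+ 2 / eps * ln (#|Z|%:R / gam)) => a1 a2 a3.
  move=> F1 dlt e4 dlL'.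
  clear -F1 dlt e4 dlL'; lra.
apply: (le_trans _ (@acc_gen R I n b U t key)).
rewrite lee_fin lerD2l lerN2 -[X in X%:R * _]/m.
case: (posnP m) => [m0|mpos].
  by rewrite m0 mul0r; exact: ltW.
have mR : 1 <= m%:R :> R by rewrite ler1n.
have dlV : 0 < dl^-1 by rewrite invr_gt0.
have Kcp : 0 < Kc by rewrite /Kc; apply: mulr_gt0; [by rewrite ltr0n | apply: addr_gt0].
have bp : 0 < b by rewrite /b divr_gt0.
have mg : 1 < m%:R / gam by rewrite ltr_pdivlMr // mul1r; exact: (lt_le_trans gam1 mR).
have mgp : 0 < m%:R / gam by exact: (lt_trans ltr01 mg).
have lnp := ln_gt0 mg.
have hx : Kc * ln (m%:R / gam) / eps < t%:R by exact: truncnS_gt.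
have hbt : ln (m%:R / gam) <= b * t%:R.
  have -> : ln (m%:R / gam) = b * (Kc * ln (m%:R / gam) / eps).
    rewrite /b; field; apply/andP; split; rewrite gt_eqF //.
  by rewrite ler_wpM2l ?(ltW bp) // ltW.
have : expR (- b * t%:R) <= (m%:R / gam)^-1.
  rewrite -[X in _ <= X](lnK (x := (m%:R / gam)^-1)); last by rewrite posrE invr_gt0.
  rewrite ler_expR lnV ?posrE // mulNr lerN2 //.
rewrite invf_div => H.
apply: (le_trans (ler_wpM2l (ler0n _ _) H)).
rewrite mulrCA divff ?mulr1 //; rewrite gt_eqF // ltr0n; exact: mpos.
Qed.
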